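(* Let $0<2\delta\le\kappa<\lambda\le1$, $0<\epsilon<1/2$, and let $n$ be a positive integer. Put \[ D_0=\frac{\lambda\log(n)^2}{\epsilon}\,2^{\sqrt{\lambda\log(n)\log\left(\frac{\lambda\log(n)^2}{\epsilon}\right)/3}},\qquad M_0=D_0^2\,n^{\lambda}\,2^{\sqrt{3\lambda\log(n)\log\left(\frac{\lambda\log(n)^2}{\epsilon}\right)}} \] (logarithms base $2$). Suppose $\mathcal{G}$ is an $(n,M,D,n^{\lambda},(1-\epsilon)D)$-bipartite expander with $D\le D_0$ and $M\le M_0$, and that a Hadamard matrix $\mathbf{H}_M$ of order $M$ is given. Let $\mathbf{Q}$ be the pooling matrix constructed from $\mathcal{G}$ and $\mathbf{H}_M$. Then for every $\bm{z}\in\{0,\pm1\}^n$ with $n^{\kappa}\le\lVert\bm{z}\rVert_0\le n^{\lambda}$ we have $\lVert\mathbf{Q}\bm{z}\rVert_\infty\ge\sqrt{1-2\epsilon}\,n^{\delta}$, and the number of rows (pooling complexity) of $\mathbf{Q}$ is \[ MD\ \le\ n^{\lambda}\left(\frac{\lambda\log(n)^2}{\epsilon}\right)^3 4^{\sqrt{3\lambda\log(n)\log\left(\frac{\lambda\log(n)^2}{\epsilon}\right)}}. \]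
   Context: A bipartite graph $\mathcal{G}=([N],[M],\mathsf{E})$ is left-$D$-regular if each left vertex has exactly $D$ neighbours; $\Gamma(S)$ is the set of neighbours of $S\subseteq[N]$. It is an $(N,M,D,K,A)$-bipartite expander if it is left-$D$-regular and $|\Gamma(S)|\ge A|S|$ for all $S\subseteq[N]$ with $|S|\le K$. The induced matrix $\mathbf{B}_{\mathcal{G}}\in\{0,1\}^{M\times N}$ has $(j,i)$-entry $1$ iff $(i,j)\in\mathsf{E}$. A Hadamard matrix of order $M$ is an $M\times M$ $\pm1$-matrix with $\mathbf{H}_M^{\intercal}\mathbf{H}_M=M\mathbf{I}$. Construction of $\mathbf{Q}$: write $\mathbf{B}_{\mathcal{G}}=\sum_{i=1}^D\mathbf{B}_i$ with each $\mathbf{B}_i\in\{0,1\}^{M\times N}$ having exactly one nonzero entry per column; set $\mathbf{D}_i=\mathbf{H}_M\mathbf{B}_i$ and stack $\mathbf{Q}=[\mathbf{D}_1;\dots;\mathbf{D}_D]$ vertically (an $MD\times N$ matrix). $\lVert\cdot\rVert_0$ counts nonzero entries; $\lVert\cdot\rVert_\infty$ is the max absolute entry. *)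

(* Defs.v *)
From HB Require Import structures.
From mathcomp Require Import all_boot all_order all_algebra.
From mathcomp Require Import all_classical all_reals all_analysis.
Set Implicit Arguments. Unset Strict Implicit. Unset Printing Implicit Defensive.
Import Order.TTheory GRing.Theory Num.Theory.
Local Open Scope ring_scope.

Section Defs.
Variable R : realType.

Definition log2 (x : R) : R := ln x / ln 2.

Definition nbhd (N M : nat) (E : {set 'I_N * 'I_M}) (S : {set 'I_N}) : {set 'I_M} :=
  [set j | [exists i in S, (i, j) \in E]].

Definition left_regular (N M D : nat) (E : {set 'I_N * 'I_M}) : Prop :=
  forall i : 'I_N, #|[set j | (i, j) \in E]| = D.

Definition bipartite_expander (N M D : nat) (K A : R) (E : {set 'I_N * 'I_M}) : Prop :=
  left_regular D E /\
  forall S : {set 'I_N}, #|S|%:R <= K -> A * #|S|%:R <= #|nbhd E S|%:R.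

Definition induced_matrix (N M : nat) (E : {set 'I_N * 'I_M}) : 'M[R]_(M, N) :=
  \matrix_(j < M, i < N) ((i, j) \in E)%:R.

Definition is_hadamard (M : nat) (H : 'M[R]_M) : Prop :=
  (forall i j, H i j = 1 \/ H i j = -1) /\ H^T *m H = M%:R%:M.

Definition valid_decomposition (N M D : nat) (E : {set 'I_N * 'I_M})
    (B : 'I_D -> 'M[R]_(M, N)) : Prop :=
  (forall i j k, B i j k = 0 \/ B i j k = 1) /\
  (forall i k, #|[set j | B i j k != 0]| = 1) /\
  induced_matrix E = \sum_(i < D) B i.

(* Q = [H B_1; ...; H B_D] stacked vertically: row i*M + j of Q is row j of
   D_i = H B_i (mxvec enumerates (i,j) in lexicographic order). *)
Definition pooling_matrix (N M D : nat) (H : 'M[R]_M) (B : 'I_D -> 'M[R]_(M, N))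
  : 'M[R]_(D * M, N) :=
  \matrix_(r < D * M, k < N) mxvec (\matrix_(i < D, j < M) (H *m B i) j k) 0 r.

Definition norm0 (N : nat) (z : 'cV[R]_N) : nat := #|[set i | z i 0 != 0]|.

Definition norminf (m : nat) (v : 'cV[R]_m) : R := \big[Num.max/0]_(r < m) `|v r 0|.

End Defs.

(* Main.v *)
Require Import Defs.
From HB Require Import structures.
From mathcomp Require Import all_boot all_order all_algebra.
From mathcomp Require Import all_classical all_reals all_analysis.
From mathcomp Require Import ring lra.
Import Order.TTheory GRing.Theory Num.Theory.
Local Open Scope ring_scope.

Lemma key_seq (R : realType) (I : eqType) (s : seq I) (b t : I -> R) :
  (forall k, b k = 0 \/ b k = 1) ->
  (forall k, t k = 0 \/ t k = 1 \/ t k = -1) ->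
  (\sum_(k <- s) b k * t k ^+ 2 = 0 /\ \sum_(k <- s) b k * t k = 0) \/
  (1 <= \sum_(k <- s) b k * t k ^+ 2 /\
   2 <= (\sum_(k <- s) b k * t k) ^+ 2 + \sum_(k <- s) b k * t k ^+ 2).
Proof.
move=> hb ht; elim: s => [|a s IH]; first by left; rewrite !big_nil.
rewrite !big_cons.

have [-> | ->] := hb a.
  by rewrite !mul0r !add0r.
rewrite !mul1r.
case: (ht a) => [->|[->|->]].
- by rewrite expr0n /= !add0r.
- right; case: IH => [[hc hx]|[h1 h2]]; rewrite expr1n.
    by rewrite hc hx; split; rewrite ?addr0 ?add0r ?expr1n; lra.
  split; first by lra.
  have : 0 <= (1 + \sum_(k <- s) b k * t k) ^+ 2 by apply: sqr_ge0.
  lra.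
- right; case: IH => [[hc hx]|[h1 h2]]; rewrite sqrrN expr1n.
    by rewrite hc hx; split; rewrite ?addr0 ?sqrrN ?expr1n; lra.
  split; first by lra.
  have : 0 <= (-1 + \sum_(k <- s) b k * t k) ^+ 2 by apply: sqr_ge0.
  lra.
Qed.

Lemma key_ineq (R : realType) (I : eqType) (s : seq I) (b t : I -> R) :
  (forall k, b k = 0 \/ b k = 1) ->
  (forall k, t k = 0 \/ t k = 1 \/ t k = -1) ->
  2 * (\sum_(k <- s) b k * t k ^+ 2 != 0)%:R - \sum_(k <- s) b k * t k ^+ 2
    <= (\sum_(k <- s) b k * t k) ^+ 2.
Proof.
move=> hb ht; case: (@key_seq R I s b t hb ht) => [[-> ->]|[h1 h2]].
  by rewrite eqxx /= mulr0 subr0 expr0n.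
have -> : (\sum_(k <- s) b k * t k ^+ 2 != 0) by apply/eqP => h; rewrite h in h1; lra.
rewrite mulr1; lra.
Qed.

Lemma norminf_ge (R : realType) (m : nat) (v : 'cV[R]_m) (r : 'I_m) :
  `|v r 0| <= norminf v.
Proof.
rewrite /norminf.
have : r \in index_enum 'I_m by rewrite mem_index_enum.
elim: (index_enum 'I_m) => [//|a s IH]; rewrite inE big_cons.
case/orP => [/eqP ->|/IH h]; rewrite le_max ?lexx //.
by rewrite h orbT.
Qed.

Lemma norminf_ge0 (R : realType) (m : nat) (v : 'cV[R]_m) : 0 <= norminf v.
Proof.
rewrite /norminf; elim: (index_enum 'I_m) => [|a s IH]; rewrite ?big_nil ?big_cons //.
by rewrite le_max IH orbT.
Qed.
Lemma sq_sum (R : realType) (m : nat) (u : 'cV[R]_m) :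
  (u^T *m u) 0 0 = \sum_j (u j 0) ^+ 2.
Proof. by rewrite mxE; apply: eq_bigr => j _; rewrite mxE expr2. Qed.

Lemma hadamard_norm (R : realType) (M : nat) (H : 'M[R]_M) (w : 'cV[R]_M) :
  H^T *m H = M%:R%:M ->
  \sum_j ((H *m w) j 0) ^+ 2 = M%:R * \sum_j (w j 0) ^+ 2.
Proof.
move=> hH; rewrite -!sq_sum trmx_mul -mulmxA (mulmxA H^T) hH.
by rewrite mul_scalar_mx -scalemxAr mxE.
Qed.

Lemma pool_entry (R : realType) (n M D : nat) (H : 'M[R]_M) (B : 'I_D -> 'M[R]_(M, n))
  (z : 'cV[R]_n) i j :
  (pooling_matrix H B *m z) (mxvec_index i j) 0 = ((H *m B i) *m z) j 0.
Proof.
rewrite !mxE; apply: eq_bigr => k _.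
by rewrite !mxE mxvecE !mxE.
Qed.

Lemma pool_sum (R : realType) (n M D : nat) (H : 'M[R]_M) (B : 'I_D -> 'M[R]_(M, n))
  (z : 'cV[R]_n) :
  \sum_r ((pooling_matrix H B *m z) r 0) ^+ 2 =
  \sum_i \sum_j (((H *m B i) *m z) j 0) ^+ 2.
Proof.
rewrite (reindex _ (curry_mxvec_bij _ _)) /= pair_bigA /=.
by apply: eq_bigr => [[i j]] _ /=; rewrite pool_entry.
Qed.

Lemma sum_indic (R : realType) (T : finType) (P : pred T) :
  \sum_(j : T) (P j)%:R = #|[set j | P j]|%:R :> R.
Proof.
rewrite -natr_sum; congr (_%:R).
rewrite -sum1_card [RHS]big_mkcond /=.
by apply: eq_bigr => j _; rewrite inE; case: (P j).
Qed.
Lemma sqrt3 (R : realType) (a b c : R) :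
  Num.sqrt (3 * a * b * c) = Num.sqrt (a * b * c / 3) * 3.
Proof.
have h3 : (3 : R) != 0 by rewrite pnatr_eq0.
have -> : 3 * a * b * c = 3 ^+ 2 * (a * b * c / 3).
  by rewrite expr2 -(mulrA 3 3) (mulrC 3 (a * b * c / 3)) divfK // !mulrA.
rewrite sqrtrM ?sqrtr_sqr ?ger0_norm // mulrC.
by [].
Qed.

Lemma part2 (R : realType) (L N s1 s3 : R) (M D : nat) :
  0 <= L -> 0 <= N -> s3 = s1 * 3 ->
  D%:R <= L * 2 `^ s1 ->
  M%:R <= (L * 2 `^ s1) ^+ 2 * N * 2 `^ s3 ->
  (M * D)%:R <= N * L ^+ 3 * 4 `^ s3.
Proof.
move=> hL hN hs hD hM.
have h2 : 0 <= 2 `^ s1 := powR_ge0 _ _.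
have h3 : 0 <= 2 `^ s3 := powR_ge0 _ _.
rewrite natrM.
apply: le_trans (ler_pM (ler0n _ _) (ler0n _ _) hM hD) _.
have -> : (4 : R) `^ s3 = 2 `^ s3 * 2 `^ s3.
  by rewrite -powRM // (_ : 2 * 2 = 4 :> R) //; lra.
have -> : (2 : R) `^ s3 = (2 `^ s1) ^+ 3.
  by rewrite hs powRrM powR_mulrn.
rewrite le_eqVlt; apply/orP; left; apply/eqP; ring.
Qed.

Theorem theorem3 (R : realType) (delta kappa lambda eps : R) (n M D : nat)
  (E : {set 'I_n * 'I_M}) (H : 'M[R]_M) (B : 'I_D -> 'M[R]_(M, n)) :
  0 < 2 * delta -> 2 * delta <= kappa -> kappa < lambda -> lambda <= 1 ->
  0 < eps -> eps < 1 / 2 -> (0 < n)%N -> (0 < D)%N ->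
  let L := lambda * (log2 n%:R) ^+ 2 / eps in
  let D0 := L * 2 `^ (Num.sqrt (lambda * log2 n%:R * log2 L / 3)) in
  let M0 := D0 ^+ 2 * n%:R `^ lambda * 2 `^ (Num.sqrt (3 * lambda * log2 n%:R * log2 L)) in
  bipartite_expander D (n%:R `^ lambda) ((1 - eps) * D%:R) E ->
  D%:R <= D0 -> M%:R <= M0 ->
  is_hadamard H ->
  valid_decomposition E B ->
  (forall z : 'cV[R]_n,
     (forall i, z i 0 = 0 \/ z i 0 = 1 \/ z i 0 = -1) ->
     n%:R `^ kappa <= (norm0 z)%:R -> (norm0 z)%:R <= n%:R `^ lambda ->
     Num.sqrt (1 - 2 * eps) * n%:R `^ delta <= norminf (pooling_matrix H B *m z))
  /\
  (M * D)%:R <= n%:R `^ lambda * L ^+ 3 * 4 `^ (Num.sqrt (3 * lambda * log2 n%:R * log2 L)).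
Proof.
move=> hd hdk hkl hl1 he0 he1 hn hD L D0 M0 [hreg hexp] hDD hMM [hpm hH] [hB01 [_ hind]].
have hlam : 0 <= lambda by lra.
have hL : 0 <= L by rewrite /L; apply: divr_ge0; [apply: mulr_ge0 => //; apply: sqr_ge0 | lra].
split; last first.
  have := @part2 R L (n%:R `^ lambda) (Num.sqrt (lambda * log2 n%:R * log2 L / 3)) _ M D hL (powR_ge0 _ _) (sqrt3 _ _ _ _).
  apply => //.

move=> z hz hk hl.
set S := [set i | z i 0 != 0].
have hnS : norm0 z = #|S| by [].
rewrite hnS in hk hl.
have hz2 k : z k 0 ^+ 2 = (z k 0 != 0)%:R.
  by case: (hz k) => [->|[->|->]]; rewrite ?expr0n ?sqrrN ?expr1n ?eqxx ?oppr_eq0 ?oner_eq0.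
have hsumz : \sum_k z k 0 ^+ 2 = #|S|%:R.
  by under eq_bigr => k _ do rewrite hz2; rewrite sum_indic.
pose c i j := \sum_k B i j k * z k 0 ^+ 2.
pose x i j : R := (B i *m z) j 0.
have hkey i j : 2 * (c i j != 0)%:R - c i j <= x i j ^+ 2.
  rewrite /x mxE; exact: (@key_ineq R _ _ (B i j) (fun k => z k 0) (hB01 i j) hz).
have hBge0 i j k : 0 <= B i j k by case: (hB01 i j k) => ->; rewrite ?lexx ?ler01.
have hc0 i j : 0 <= c i j.
  by apply: sumr_ge0 => k _; apply: mulr_ge0 => //; apply: sqr_ge0.
pose d j := \sum_i c i j.
have hdj j : d j = \sum_k ((k, j) \in E)%:R * z k 0 ^+ 2.
  rewrite /d /c exchange_big /=; apply: eq_bigr => k _.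
  rewrite -mulr_suml; congr (_ * _).
  have := congr1 (fun A : 'M[R]_(M, n) => A j k) hind; rewrite /= summxE mxE => <-.
  by [].
have hind_le j : 2 * (d j != 0)%:R - d j <= \sum_i (2 * (c i j != 0)%:R - c i j).
  rewrite sumrB -mulr_sumr; apply: lerB; last by rewrite /d.
  apply: ler_wpM2l => //.
  have [hd0|hne] := boolP (d j == 0).
    by apply: sumr_ge0 => i _; apply: ler0n.
  have [i /andP [_ hci]] := psumr_neq0P (fun i _ => hc0 i j) (elimN eqP hne).
  rewrite (bigD1 i) //= (gt_eqF hci) /=.
  by rewrite lerDl; apply: sumr_ge0 => i' _; apply: ler0n.
have hF j : forall k : 'I_n, true -> 0 <= ((k, j) \in E)%:R * z k 0 ^+ 2.
  by move=> k _; apply: mulr_ge0; [apply: ler0n | apply: sqr_ge0].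
have hdne j : (d j != 0) = (j \in nbhd E S).
  rewrite inE hdj; apply/idP/idP.
    move=> hne; have [k /andP [_ hk0]] := psumr_neq0P (hF j) (elimN eqP hne).
    apply/existsP; exists k; rewrite inE.
    move: hk0; rewrite hz2; case: ((k, j) \in E); case: (z k 0 != 0);
      by rewrite ?mul0r ?mulr0 ?ltxx.
  case/existsP => k /andP [hkS hkE]; rewrite inE in hkS.
  apply/eqP => h0; have := @psumr_eq0P _ _ _ _ (hF j) h0 k isT.
  by rewrite hkE hz2 hkS mul1r => /eqP; rewrite oner_eq0.
have hsumd : \sum_j d j = D%:R * #|S|%:R.
  rewrite (eq_bigr _ (fun j _ => hdj j)).
  rewrite exchange_big /=.
  under eq_bigr => k _ do rewrite -mulr_suml sum_indic hreg.
  by rewrite -mulr_sumr hsumz.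
have hsumn : \sum_j (d j != 0)%:R = #|nbhd E S|%:R :> R.
  rewrite (eq_bigr (fun j => (j \in nbhd E S)%:R)); last by move=> j _; rewrite hdne.
  rewrite sum_indic; congr (_%:R); apply: eq_card => j; by rewrite inE.
have hexpS := hexp S hl.
have hmain : (1 - 2 * eps) * D%:R * #|S|%:R <= \sum_i \sum_j x i j ^+ 2.
  apply: le_trans (_ : \sum_i \sum_j (2 * (c i j != 0)%:R - c i j) <= _); last first.
    by apply: ler_sum => i _; apply: ler_sum => j _; apply: hkey.
  rewrite exchange_big /=.
  apply: le_trans (_ : \sum_j (2 * (d j != 0)%:R - d j) <= _); last first.
    by apply: ler_sum => j _; apply: hind_le.
  rewrite sumrB -mulr_sumr hsumn hsumd.
  move: hexpS; set y := D%:R * #|S|%:R; set g := #|nbhd E S|%:R.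
  have -> : (1 - eps) * D%:R * #|S|%:R = (1 - eps) * y by rewrite /y mulrA.
  have -> : (1 - 2 * eps) * D%:R * #|S|%:R = (1 - 2 * eps) * y by rewrite /y mulrA.
  move=> h; rewrite mulrBl mul1r -mulrA; move: h; rewrite mulrBl mul1r.
  lra.
set v := pooling_matrix H B *m z; set m := norminf v.
have hsumv : \sum_r (v r 0) ^+ 2 = M%:R * \sum_i \sum_j x i j ^+ 2.
  rewrite pool_sum mulr_sumr; apply: eq_bigr => i _.
  by rewrite -mulmxA hadamard_norm.
have hvle : \sum_r (v r 0) ^+ 2 <= (D * M)%:R * m ^+ 2.
  apply: le_trans (_ : \sum_(r < D * M) m ^+ 2 <= _).
    apply: ler_sum => r _; rewrite !expr2.
    apply: le_trans (_ : `|v r 0| * `|v r 0| <= _).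
      by rewrite -normrM ler_norm.
    by apply: ler_pM; [apply: normr_ge0|apply: normr_ge0|apply: norminf_ge|apply: norminf_ge].
  rewrite sumr_const (_ : #|_| = (D * M)%N); last exact: card_ord.
  by rewrite mulr_natl.
have hSpos : 0 < #|S|%:R :> R.
  by apply: lt_le_trans hk; apply: powR_gt0; rewrite ltr0n.
have hMpos : 0 < M%:R :> R.
  apply: lt_le_trans (_ : (1 - eps) * D%:R * #|S|%:R <= _).
    by apply: mulr_gt0 => //; apply: mulr_gt0; [lra | rewrite ltr0n].
  apply: le_trans hexpS _; rewrite ler_nat.
  by apply: leq_trans (max_card _) _; rewrite card_ord.
have hsq : (1 - 2 * eps) * #|S|%:R <= m ^+ 2.
  have hDM : 0 < (D * M)%:R :> R by rewrite natrM; apply: mulr_gt0 => //; rewrite ltr0n.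
  rewrite -(ler_pM2l hDM); apply: le_trans hvle; rewrite hsumv.
  have -> : (D * M)%:R * ((1 - 2 * eps) * #|S|%:R) = M%:R * ((1 - 2 * eps) * D%:R * #|S|%:R).
    by rewrite natrM; ring.
  by apply: ler_wpM2l => //; apply: ltW.
have hm0 : 0 <= m := @norminf_ge0 _ _ v.
have hs0 : 0 <= Num.sqrt (1 - 2 * eps) * n%:R `^ delta.
  by apply: mulr_ge0; [apply: sqrtr_ge0 | apply: powR_ge0].
suff h : (Num.sqrt (1 - 2 * eps) * n%:R `^ delta) ^+ 2 <= m ^+ 2.
  by move: h; rewrite ler_sqr ?nnegrE.
rewrite exprMn sqr_sqrtr; last by lra.
rewrite -(powR_mulrn 2 (powR_ge0 n%:R delta)) -powRrM.
apply: le_trans hsq; apply: ler_wpM2l; first by lra.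
apply: le_trans hk; apply: ler_powR; first by rewrite ler1n.
lra.
Qed.
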